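(* $\mathbf{PL}<^{\mathrm{fin}}_{\mathrm{Learn}}E_{set}$: every finite $\mathbf{PL}$-learnable family of structures is $E_{set}$-learnable, and there is a finite family that is $E_{set}$-learnable but not $\mathbf{PL}$-learnable.
   Context: All structures are countable, have domain $\mathbb{N}$, are in a finite relational signature, and are identified with their atomic diagrams (elements of $2^{\mathbb{N}}$). A family of structures $\mathfrak{K}$ is a countable set of pairwise nonisomorphic such structures; $\mathcal{S}\restriction_s$ is the finite substructure on $\{0,\dots,s\}$; $\mathrm{LD}(\mathfrak{K})\subseteq2^{\mathbb{N}}$ is the set of structures with domain $\mathbb{N}$ isomorphic to a member of $\mathfrak{K}$ (subspace topology). For an equivalence relation $E$ on a space $X$, $\mathfrak{K}$ is $E$-learnable if there is a continuous $\Gamma:\mathrm{LD}(\mathfrak{K})\to X$ with $\mathcal{S}\cong\mathcal{S}'\iff\Gamma(\mathcal{S})E\Gamma(\mathcal{S}')$ on $\mathrm{LD}(\mathfrak{K})$. Fix a computable bijection $\langle\cdot,\cdot\rangle:\mathbb{N}^2\to\mathbb{N}$; for $p\in\mathbb{N}^{\mathbb{N}\times\mathbb{N}}$ let $p^{[m]}(n)=p(\langle m,n\rangle)$; $p\,E_{set}\,q\iff\{p^{[m]}:m\in\mathbb{N}\}=\{q^{[m]}:m\in\mathbb{N}\}$. A learner is an arbitrary function from $\{\mathcal{S}\restriction_s:\mathcal{S}\in\mathrm{LD}(\mathfrak{K})\}$ to $\{\ulcorner\mathcal{A}\urcorner:\mathcal{A}\in\mathfrak{K}\}\cup\{?\}$.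 $\mathfrak{K}$ is $\mathbf{PL}$-learnable if some learner $\mathbf{M}$ satisfies: for every $\mathcal{S}\in\mathrm{LD}(\mathfrak{K})$ and $\mathcal{A}\in\mathfrak{K}$, $\{n:\mathbf{M}(\mathcal{S}\restriction_n)=\ulcorner\mathcal{A}\urcorner\}$ is infinite iff $\mathcal{A}\cong\mathcal{S}$. $X\leq^{\mathrm{fin}}_{\mathrm{Learn}}Y$ means every finite $X$-learnable family is $Y$-learnable; $<^{\mathrm{fin}}_{\mathrm{Learn}}$ means $\leq^{\mathrm{fin}}_{\mathrm{Learn}}$ but not the converse. *)

(* Defs.v *)
From mathcomp Require Import all_boot.
Set Implicit Arguments. Unset Strict Implicit. Unset Printing Implicit Defensive.

(* A finite relational signature: the list of arities of its relation symbols. *)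
Definition signature := seq nat.

Definition arity (sg : signature) (i : 'I_(size sg)) : nat := nth 0 sg i.

(* A countable structure with domain nat: an interpretation of each relation
   symbol.  This carries exactly the information of its atomic diagram. *)
Definition Structure (sg : signature) : Type :=
  forall i : 'I_(size sg), (arity i).-tuple nat -> bool.

Definition iso (sg : signature) (S T : Structure sg) : Prop :=
  exists f : nat -> nat, bijective f /\
    forall (i : 'I_(size sg)) (t : (arity i).-tuple nat),
      S i t = T i (map_tuple f t).

Definition agree (sg : signature) (s : nat) (S T : Structure sg) : Prop :=
  forall (i : 'I_(size sg)) (t : (arity i).-tuple nat),
    all (fun x => x <= s) t -> S i t = T i t.

Definition noniso_family (sg : signature) (n : nat) (K : 'I_n -> Structure sg) : Prop :=
  forall i j : 'I_n, i != j -> ~ iso (K i) (K j).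

Definition LD (sg : signature) (n : nat) (K : 'I_n -> Structure sg)
  (S : Structure sg) : Prop := exists i : 'I_n, iso S (K i).

(* E_set on N^(N x N) (points written curried: p m n = p(<m,n>) = p^[m](n)). *)
Definition Eset (p q : nat -> nat -> nat) : Prop :=
  (forall m, exists m', forall k, p m k = q m' k) /\
  (forall m', exists m, forall k, q m' k = p m k).

(* Continuity of Gamma : LD(K) -> N^(N x N), with LD(K) a subspace of 2^N
   (basic neighbourhoods of S given by the finite substructures S|_s) and
   N^(N x N) carrying the product topology of discrete copies of N. *)
Definition continuous_on_LD (sg : signature) (n : nat)
  (K : 'I_n -> Structure sg) (G : Structure sg -> nat -> nat -> nat) : Prop :=
  forall S, LD K S -> forall m k, exists s, forall S', LD K S' ->
    agree s S S' -> G S' m k = G S m k.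

Definition Eset_learnable (sg : signature) (n : nat)
  (K : 'I_n -> Structure sg) : Prop :=
  exists G : Structure sg -> nat -> nat -> nat,
    continuous_on_LD K G /\
    forall S S', LD K S -> LD K S' -> (iso S S' <-> Eset (G S) (G S')).

(* A learner: a function of S|_s (represented by (s, S) with the value depending
   only on S|_s), returning a code (an index of K) or ? (None). *)
Definition learner (sg : signature) (n : nat) (K : 'I_n -> Structure sg)
  (M : nat -> Structure sg -> option 'I_n) : Prop :=
  forall s S S', LD K S -> LD K S' -> agree s S S' -> M s S = M s S'.

Definition PL_learnable (sg : signature) (n : nat)
  (K : 'I_n -> Structure sg) : Prop :=
  exists M : nat -> Structure sg -> option 'I_n, learner K M /\
    forall S, LD K S -> forall i : 'I_n,
      ((forall N, exists s, N <= s /\ M s S = Some i) <-> iso (K i) S).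

(* Main.v *)
Require Import Defs.
From mathcomp Require Import all_boot.
From Stdlib Require Import Classical ClassicalEpsilon.
From mathcomp Require Import zify.
Set Implicit Arguments. Unset Strict Implicit. Unset Printing Implicit Defensive.

Lemma map_tuple_id n (t : n.-tuple nat) : map_tuple id t = t.
Proof. by apply: val_inj; rewrite /= map_id. Qed.

Lemma iso_refl sg (S : Structure sg) : iso S S.
Proof.
exists id; split; first by exists id.
by move=> i t; rewrite map_tuple_id.
Qed.

Lemma iso_sym sg (S T : Structure sg) : iso S T -> iso T S.
Proof.
case=> f [[g fK gK] H]; exists g; split; first by exists f.
move=> i t; rewrite H; congr (T i _); apply: val_inj => /=.
by rewrite -map_comp (eq_map (f := f \o g) gK) map_id.
Qed.

Lemma iso_trans sg (S T U : Structure sg) : iso S T -> iso T U -> iso S U.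
Proof.
case=> f [bf Hf] [g [bg Hg]]; exists (g \o f); split; first exact: bij_comp.
move=> i t; rewrite Hf Hg; congr (U i _); apply: val_inj => /=.
by rewrite map_comp.
Qed.

Lemma agree_mono sg (S S' : Structure sg) s k : s <= k -> agree k S S' -> agree s S S'.
Proof.
move=> sk H i t Ht; apply: H; apply/allP => x /(allP Ht) xs; exact: leq_trans xs sk.
Qed.

Definition gb sg n (M : nat -> Structure sg -> option 'I_n) S s i : bool :=
  if M s S is Some j then val j == i else false.

Definition G1 sg n (M : nat -> Structure sg -> option 'I_n) (S : Structure sg) (m k : nat) : nat :=
  let q := m./2 in let i := q %% n.+1 in let N := q %/ n.+1 in
  if odd m then (2 * i + [exists s : 'I_k.+1, (N <= s) && gb M S s i])%N
  else (2 * i + (N <= k))%N.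

Definition code (n : nat) (b : bool) i N := (b + (N * n.+1 + i).*2)%N.

Lemma G1_code sg n (M : nat -> Structure sg -> option 'I_n) (S : Structure sg) b i N k : i < n.+1 ->
  G1 M S (code n b i N) k =
  if b then (2 * i + [exists s : 'I_k.+1, (N <= s) && gb M S s i])%N
  else (2 * i + (N <= k))%N.
Proof.
move=> Hi; rewrite /G1 /code oddD odd_double addbF oddb half_bit_double.
by rewrite modnMDl modn_small // divnMDl // divn_small // addn0.
Qed.

Lemma code_dec n m : m = code n (odd m) (m./2 %% n.+1) (m./2 %/ n.+1).
Proof. by rewrite /code -divn_eq odd_double_half. Qed.

Definition fin1 sg n (M : nat -> Structure sg -> option 'I_n) S i :=
  exists N, forall s, N <= s -> ~~ gb M S s i.

Lemma half1 sg n (M : nat -> Structure sg -> option 'I_n) (S S' : Structure sg) :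
  (forall i, fin1 M S i -> fin1 M S' i) ->
  forall m, exists m', forall k, G1 M S m k = G1 M S' m' k.
Proof.
move=> H m.
set i := m./2 %% n.+1; set N := m./2 %/ n.+1.
have Hi : i < n.+1 by rewrite ltn_pmod.
rewrite (code_dec n m) -/i -/N.
case: (odd m); last first.
  by exists (code n false i N) => k; rewrite !G1_code.
case: (classic (exists s, (N <= s) && gb M S s i)) => [ex|nex].
  exists (code n false i (ex_minn ex)) => k; rewrite !G1_code //.
  case: ex_minnP => j Pj jmin; congr (_ + nat_of_bool _).
  case: (leqP j k) => jk.
    have jk1 : j < k.+1 by []. apply: (introT existsP). by exists (Ordinal jk1).
  apply/negbTE/negP => /existsP [s Ps]; have := jmin _ Ps.
  have := ltn_ord s; lia.
have [N' HN'] : fin1 M S' i.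
  apply: H; exists N => s Ns; apply/negP => g; apply: nex; exists s.
  by rewrite Ns g.
exists (code n true i N') => k; rewrite !G1_code //; congr (_ + nat_of_bool _).
have -> : [exists s : 'I_k.+1, (N <= s) && gb M S s i] = false.
  apply/negbTE/negP => /existsP [s Ps]; apply: nex; by exists s.
apply/esym/negbTE/negP => /existsP [s /andP [Ns g]].
by have := HN' _ Ns; rewrite g.
Qed.

Lemma half2 sg n (M : nat -> Structure sg -> option 'I_n) (S S' : Structure sg) :
  (forall m, exists m', forall k, G1 M S m k = G1 M S' m' k) ->
  forall i, fin1 M S i -> fin1 M S' i.
Proof.
move=> H i [N HN].
case: (leqP n i) => ni.
  exists 0 => s _; rewrite /gb; case: (M s S') => // j.
  by apply/negP => /eqP ej; have := ltn_ord j; rewrite ej; lia.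
have Hi : i < n.+1 by lia.
have [m' Hm'] := H (code n true i N).
have Hk : forall k, G1 M S' m' k = (2 * i)%N.
  move=> k; rewrite -Hm' G1_code //.
  have -> : [exists s : 'I_k.+1, (N <= s) && gb M S s i] = false.
    apply/negbTE/negP => /existsP [s /andP [Ns g]].
    by have := HN _ Ns; rewrite g.
  by rewrite addn0.
move: Hk; rewrite (code_dec n m').
set i' := m'./2 %% n.+1; set N' := m'./2 %/ n.+1.
have Hi' : i' < n.+1 by rewrite ltn_pmod.
case: (odd m') => Hk; last first.
  by have := Hk N'; rewrite G1_code // leqnn; lia.
have ii' : i' = i.
  have := Hk 0; rewrite G1_code //.
  case: [exists _, _]; lia.
exists N' => s Ns; apply/negP => g.
have := Hk s; rewrite G1_code // ii'.
have -> : [exists s0 : 'I_s.+1, (N' <= s0) && gb M S' s0 i] = true.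
  by apply/existsP; exists (Ordinal (ltnSn s)); rewrite /= Ns g.
lia.
Qed.

Lemma part1 sg n (K : 'I_n -> Structure sg) :
  noniso_family K -> PL_learnable K -> Eset_learnable K.
Proof.
move=> _ [M [HM HPL]]; exists (G1 M); split.
  move=> S HS m k; exists k => S' HS' Hag.
  rewrite /G1; case: odd => //; congr (_ + nat_of_bool _).
  apply: eq_existsb => s; congr andb; rewrite /gb (HM s S S') //.
  by apply: agree_mono Hag; have := ltn_ord s; lia.
have finiff : forall T, LD K T -> forall i (Hi : i < n),
    fin1 M T i <-> ~ iso (K (Ordinal Hi)) T.
  move=> T HT i Hi; rewrite -(HPL T HT).
  have gbE : forall s, gb M T s i <-> M s T = Some (Ordinal Hi).
    move=> s; rewrite /gb; case: (M s T) => [j|] //; split.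
      by move/eqP => ej; congr Some; apply: val_inj.
    by case=> ->.
  split.
    case=> N HN all; have [s [Ns e]] := all N.
    by have := HN s Ns; move/gbE: e => ->.
  move=> nall; apply: NNPP => nfin; apply: nall => N.
  apply: NNPP => nex; apply: nfin; exists N => s Ns; apply/negP => g.
  by apply: nex; exists s; split => //; apply/gbE.
have finbig : forall T i, n <= i -> fin1 M T i.
  move=> T i ni; exists 0 => s _; rewrite /gb; case: (M s T) => // j.
  by apply/negP => /eqP ej; have := ltn_ord j; rewrite ej; lia.
move=> S S' HS HS'; split.
  move=> Hiso.
  have E : forall i, fin1 M S i <-> fin1 M S' i.
    move=> i; case: (leqP n i) => ni; first by split => _; apply: finbig.
    rewrite (finiff _ HS _ ni) (finiff _ HS' _ ni); split => nI I; apply: nI.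
      by apply: iso_trans I (iso_sym Hiso).
    by apply: iso_trans I Hiso.
  split; apply: half1 => i; apply E.
case=> H1 H2.
have [j Hj] := HS.
have ej : Ordinal (ltn_ord j) = j by apply: val_inj.
have nf : ~ fin1 M S j.
  by rewrite (finiff _ HS _ (ltn_ord j)) ej; apply; apply: iso_sym.
have nf' : ~ fin1 M S' j by move=> f'; apply: nf; exact: half2 H2 _ f'.
move: nf'; rewrite (finiff _ HS' _ (ltn_ord j)) ej => /NNPP Hj2.
exact: iso_trans Hj Hj2.
Qed.


Definition cls (x : nat) := logn 2 x.+1.
Definition RA (a b : nat) := cls a == cls b.
Definition clsB (x : nat) := if x is 0 then 0 else (cls x).+1.
Definition RB (a b : nat) := clsB a == clsB b.
Definition vcode (c m : nat) := (2 ^ c * (2 * m + 1)).-1.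

Lemma cls_code c m : cls (vcode c m) = c.
Proof.
rewrite /cls /vcode prednK ?muln_gt0 ?expn_gt0 //.
rewrite lognM ?expn_gt0 ?addn1 // pfactorK // logn_coprime ?addn0 //.
  by rewrite coprime2n /= oddM.
by rewrite addn1.
Qed.

Lemma vcode_ge c m : (c <= vcode c m) /\ (m <= vcode c m).
Proof.
rewrite /vcode; have h1 := ltn_expl c (isT : 1 < 2).
have h2 : 2 * m + 1 <= 2 ^ c * (2 * m + 1) by rewrite leq_pmull // expn_gt0.
have h3 : 2 ^ c <= 2 ^ c * (2 * m + 1) by rewrite leq_pmulr // addn1.
split; lia.
Qed.

Lemma cls_le x : cls x <= x.
Proof.
rewrite /cls; have h := dvdn_leq (ltn0Sn x) (pfactor_dvdnn 2 x.+1).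
have := ltn_expl (logn 2 x.+1) (isT : 1 < 2); lia.
Qed.

Definition sw (a b y : nat) := if y == a then b else if y == b then a else y.

Lemma swK a b : involutive (sw a b).
Proof.
move=> y; rewrite /sw.
case: (eqVneq y a) => [->|ya]; first by rewrite eqxx; case: eqVneq => // ->.
case: (eqVneq y b) => [->|yb]; first by rewrite eqxx.
by rewrite (negbTE ya) (negbTE yb).
Qed.

Lemma sw_bij a b : bijective (sw a b).
Proof. by exists (sw a b); apply: swK. Qed.

Lemma bound_fin (h : nat -> nat) r : exists B, forall x, x <= r -> h x < B.
Proof.
elim: r => [|r [B HB]]; first by exists (h 0).+1 => x; rewrite leqn0 => /eqP ->.
exists (maxn B (h r.+1).+1) => x; rewrite leq_eqVlt => /orP [/eqP ->|xr].
  by rewrite leq_max leqnn orbT.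
by rewrite leq_max HB.
Qed.

Lemma ext_lemma (E : nat -> nat -> bool) (Erefl : forall a, E a a)
  (Esym : forall a b, E a b = E b a)
  (Etr : forall a b c, E a b -> E b c -> E a c) f r s :
  bijective f -> r <= s ->
  (forall a b, a <= r -> b <= r -> RA (f a) (f b) = E a b) ->
  exists f', [/\ bijective f', (forall x, x <= r -> f' x = f x) &
     (forall a b, a <= s -> b <= s -> RA (f' a) (f' b) = E a b)].
Proof.
move=> bf; elim: s => [|s IH] rs Hf.
  by exists f; split => // a b a0 b0; apply: Hf; lia.
case: (leqP r s) => rs'; last first.
  by exists f; split => // a b a0 b0; apply: Hf; lia.
have [h [bh hf Hh]] := IH rs' Hf.
have [B HB] := bound_fin h s.
have [v [vB Hv]] : exists v, B <= v /\
    forall y, y <= s -> RA v (h y) = E s.+1 y.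
  case: (boolP [exists y : 'I_s.+1, E s.+1 y]).
    case/existsP => -[y0 /= y0s] Ey0.
    exists (vcode (cls (h y0)) B); split; first by case: (vcode_ge (cls (h y0)) B).
    move=> y ys; rewrite /RA cls_code -/(RA (h y0) (h y)) Hh //.
    apply/idP/idP => [E1|E1]; first exact: Etr Ey0 E1.
    by apply: Etr E1; rewrite Esym.
  move=> nex; exists (vcode B.+1 0); split.
    by case: (vcode_ge B.+1 0) => h1 _; lia.
  move=> y ys; rewrite /RA cls_code.
  have -> : E s.+1 y = false.
    apply/negbTE/negP => Ey; move/negP: nex; apply; apply/existsP.
    by exists (Ordinal (n:=s.+1) ys).
  have := cls_le (h y); have := HB y ys; move=> h1 h2.
  apply/negbTE; apply/eqP; lia.
have [g hK gK] := bh.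
exists (sw v (h s.+1) \o h); split.
- exact: bij_comp (sw_bij _ _) bh.
- move=> x xr /=; rewrite -hf //; rewrite /sw.
  have xs : x <= s by lia.
  have := HB x xs => hB.
  have -> : (h x == v) = false by apply/negbTE/eqP; lia.
  have -> : (h x == h s.+1) = false.
    by apply/negbTE/eqP => e; have := can_inj hK e; lia.
  by [].
- have Hx : forall x, x <= s -> sw v (h s.+1) (h x) = h x.
    move=> x xs; rewrite /sw.
    have := HB x xs => hB.
    have -> : (h x == v) = false by apply/negbTE/eqP; lia.
    have -> : (h x == h s.+1) = false.
      by apply/negbTE/eqP => e; have := can_inj hK e; lia.
    by [].
  have Hs : sw v (h s.+1) (h s.+1) = v.
    by rewrite /sw; case: eqVneq => [->|]; rewrite ?eqxx.
  move=> a b a1 b1 /=.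
  have [aS|->] : a <= s \/ a = s.+1 by lia.
    have [bs|->] : b <= s \/ b = s.+1 by lia.
      by rewrite !Hx // Hh.
    by rewrite (Hx a) // Hs /RA eq_sym -/(RA v (h a)) Hv // Esym.
  have [bs|->] : b <= s \/ b = s.+1 by lia.
    by rewrite (Hx b) // Hs Hv.
  by rewrite Hs /RA eqxx Erefl.
Qed.


Definition sg2 : signature := [:: 2].
Definition o0 : 'I_(size sg2) := ord0.
Definition pt (a b : nat) : (arity o0).-tuple nat := [tuple a; b].

Definition Str (R : nat -> nat -> bool) (g : nat -> nat) : Structure sg2 :=
  fun i t => match tval t with [:: a; b] => R (g a) (g b) | _ => false end.

Definition Rof (n : nat) := if n is 0 then RA else RB.
Definition K2 (i : 'I_2) : Structure sg2 := Str (Rof (val i)) id.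
Definition iB : 'I_2 := @Ordinal 2 1 isT.

Lemma iso_Str R g : bijective g -> iso (Str R g) (Str R id).
Proof.
move=> bg; exists g; split => // i t; rewrite /Str /=.
by case: t => [[|a [|b [|c l]]] Hs].
Qed.

Lemma relS_LD (S : Structure sg2) R : iso S (Str R id) ->
  exists f, bijective f /\ forall a b, S o0 (pt a b) = R (f a) (f b).
Proof. by case=> f [bf H]; exists f; split => // a b; rewrite H. Qed.

Lemma agree_Str s R R' g g' :
  (forall a b, a <= s -> b <= s -> R (g a) (g b) = R' (g' a) (g' b)) ->
  agree s (Str R g) (Str R' g').
Proof.
move=> H i t; rewrite /Str; case: t => [[|a [|b [|c l]]] Hs] //=.
by case/andP => Ha /andP [Hb _]; apply: H.
Qed.

Definition hasSing (S : Structure sg2) :=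
  exists x, forall y, y != x -> ~~ S o0 (pt x y).

Lemma hasSing_A (S : Structure sg2) f : bijective f ->
  (forall a b, S o0 (pt a b) = RA (f a) (f b)) -> ~ hasSing S.
Proof.
case=> g fK gK H [x Hx].
set v := vcode (cls (f x)) (f x).+1.
have Hv : cls v = cls (f x) by rewrite cls_code.
have fxv : f x < v by case: (vcode_ge (cls (f x)) (f x).+1).
have ne : g v != x by apply/eqP => e; move: fxv; rewrite -e gK ltnn.
by have := Hx _ ne; rewrite H gK /RA Hv eqxx.
Qed.

Lemma hasSing_B (S : Structure sg2) f : bijective f ->
  (forall a b, S o0 (pt a b) = RB (f a) (f b)) -> hasSing S.
Proof.
case=> g fK gK H; exists (g 0) => y ny; rewrite H gK /RB /=.
case e: (f y) => [|z] //.
by move: ny; rewrite -e fK eqxx.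
Qed.

Lemma sing_iff (S : Structure sg2) i : iso S (K2 i) -> (hasSing S <-> val i = 1).
Proof.
case: i => [[|[|j]] Hi] //= HS; have [f [bf Hf]] := relS_LD HS.
  by split => // HH; case: (hasSing_A bf Hf HH).
by split => // _; exact: hasSing_B bf Hf.
Qed.

Lemma noniso_K2 : noniso_family K2.
Proof.
move=> i j nij Hij.
have := sing_iff Hij; have := sing_iff (iso_refl (K2 i)).
move=> H1 H2; move: nij.
case: i j Hij H1 H2 => [[|[|i]] Hi] // [[|[|j]] Hj] //= _ H1 H2.
- by have := proj1 H1 (proj2 H2 erefl).
- by have := proj1 H2 (proj2 H1 erefl).
Qed.

Definition G2 (S : Structure sg2) (m k : nat) : nat :=
  if odd m then [exists y : 'I_k.+1, (val y != m./2) && S o0 (pt m./2 y)]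
  else (m./2 <= k).

Definition c2 (b : bool) (x : nat) := (b + x.*2)%N.
Lemma G2_c2 S b x k : G2 S (c2 b x) k =
  if b then [exists y : 'I_k.+1, (val y != x) && S o0 (pt x y)] else (x <= k).
Proof. by rewrite /G2 /c2 oddD odd_double addbF oddb half_bit_double. Qed.
Lemma c2_dec m : m = c2 (odd m) m./2.
Proof. by rewrite /c2 odd_double_half. Qed.

Lemma half2a (S S' : Structure sg2) : (hasSing S -> hasSing S') ->
  forall m, exists m', forall k, G2 S m k = G2 S' m' k.
Proof.
move=> H m; rewrite (c2_dec m); set x := m./2.
case: (odd m); last by exists (c2 false x) => k; rewrite !G2_c2.
case: (classic (exists y, (y != x) && S o0 (pt x y))) => [ex|nex].
  exists (c2 false (ex_minn ex)) => k; rewrite !G2_c2.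
  case: ex_minnP => j Pj jmin; congr nat_of_bool.
  case: (leqP j k) => jk.
    by apply/existsP; exists (Ordinal (n:=k.+1) jk).
  apply/negbTE/negP => /existsP [y Py]; have := jmin _ Py.
  have := ltn_ord y; rewrite /=; lia.
have [x' Hx'] : hasSing S'.
  apply: H; exists x => y ny; apply/negP => r; apply: nex; exists y.
  by rewrite ny r.
exists (c2 true x') => k; rewrite !G2_c2; congr nat_of_bool.
have -> : [exists y : 'I_k.+1, (val y != x) && S o0 (pt x y)] = false.
  apply/negbTE/negP => /existsP [y Py]; apply: nex; by exists (val y).
apply/esym/negbTE/negP => /existsP [y /andP [ny r]].
by have := Hx' _ ny; rewrite r.
Qed.

Lemma half2b (S S' : Structure sg2) :
  (forall m, exists m', forall k, G2 S m k = G2 S' m' k) ->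
  hasSing S -> hasSing S'.
Proof.
move=> H [x Hx].
have [m' Hm'] := H (c2 true x).
have Hk : forall k, G2 S' m' k = 0.
  move=> k; rewrite -Hm' G2_c2.
  have -> : [exists y : 'I_k.+1, (val y != x) && S o0 (pt x y)] = false.
    apply/negbTE/negP => /existsP [y /andP [ny r]].
    by have := Hx _ ny; rewrite r.
  by [].
move: Hk; rewrite (c2_dec m'); set x' := m'./2.
case: (odd m') => Hk; last by have := Hk x'; rewrite G2_c2 leqnn.
exists x' => y ny; apply/negP => r.
have := Hk y; rewrite G2_c2.
have -> : [exists y0 : 'I_y.+1, (val y0 != x') && S' o0 (pt x' y0)] = true.
  by apply/existsP; exists (Ordinal (ltnSn y)); rewrite /= ny r.
by [].
Qed.

Lemma Eset_K2 : Eset_learnable K2.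
Proof.
exists G2; split.
  move=> S HS m k; exists (m + k) => S' HS' Hag.
  rewrite /G2; case: odd => //; congr nat_of_bool.
  apply: eq_existsb => y; congr andb; apply/esym; apply: Hag.
  rewrite /= andbT; apply/andP; split.
    by have := odd_double_half m; rewrite -addnn; lia.
  by have := ltn_ord y; rewrite /=; lia.
move=> S S' [i Hi] [j Hj]; split.
  move=> Hiso.
  have Hi' : iso S' (K2 i) := iso_trans (iso_sym Hiso) Hi.
  have E : hasSing S <-> hasSing S'.
    by rewrite (sing_iff Hi) (sing_iff Hi').
  by split; apply: half2a; apply E.
case=> H1 H2.
have E : val i = 1 <-> val j = 1.
  rewrite -(sing_iff Hi) -(sing_iff Hj); split; [exact: half2b H1|exact: half2b H2].
have eij : i = j.
  apply: val_inj; move: E; case: i {Hi} => [[|[|i]] Hi] //; case: j {Hj} => [[|[|j]] Hj] //=.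
  - by case=> _ /(_ erefl).
  - by case=> /(_ erefl).
apply: iso_trans Hi _; rewrite eij; exact: iso_sym.
Qed.


Definition PLprop (M : nat -> Structure sg2 -> option 'I_2) :=
  forall S, LD K2 S -> forall i : 'I_2,
      ((forall N, exists s, N <= s /\ M s S = Some i) <-> iso (K2 i) S).

Definition Qstep (M : nat -> Structure sg2 -> option 'I_2) (p : (nat -> nat) * nat)
  (t : nat) (q : (nat -> nat) * nat * nat) : Prop :=
  [/\ bijective q.1.1, (forall x, x <= p.2 -> q.1.1 x = p.1 x),
      [&& p.2 < q.2, q.2 <= q.1.2 & t <= q.1.2],
      M q.2 (Str RA q.1.1) = Some iB &
      (forall y, y <= t -> exists2 x, x <= q.1.2 & q.1.1 x = y)].

Lemma Q1 (M : nat -> Structure sg2 -> option 'I_2) (p : (nat -> nat) * nat) (t : nat) (q : (nat -> nat) * nat * nat) : Qstep M p t q -> bijective q.1.1. Proof. by case. Qed.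
Lemma Q2 (M : nat -> Structure sg2 -> option 'I_2) (p : (nat -> nat) * nat) (t : nat) (q : (nat -> nat) * nat * nat) : Qstep M p t q -> forall x, x <= p.2 -> q.1.1 x = p.1 x. Proof. by case. Qed.
Lemma Q3 (M : nat -> Structure sg2 -> option 'I_2) (p : (nat -> nat) * nat) (t : nat) (q : (nat -> nat) * nat * nat) : Qstep M p t q -> [&& p.2 < q.2, q.2 <= q.1.2 & t <= q.1.2]. Proof. by case. Qed.
Lemma Q4 (M : nat -> Structure sg2 -> option 'I_2) (p : (nat -> nat) * nat) (t : nat) (q : (nat -> nat) * nat * nat) : Qstep M p t q -> M q.2 (Str RA q.1.1) = Some iB. Proof. by case. Qed.
Lemma Q5 (M : nat -> Structure sg2 -> option 'I_2) (p : (nat -> nat) * nat) (t : nat) (q : (nat -> nat) * nat * nat) : Qstep M p t q -> forall y, y <= t -> exists2 x, x <= q.1.2 & q.1.1 x = y. Proof. by case. Qed.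


Lemma LD_A g : bijective g -> LD K2 (Str RA g).
Proof. by move=> bg; exists ord0; apply: iso_Str. Qed.

Lemma LD_B g : bijective g -> LD K2 (Str RB g).
Proof. by move=> bg; exists iB; apply: iso_Str. Qed.

Lemma cls0 : cls 0 = 0.
Proof. by rewrite /cls logn1. Qed.

Lemma step_lemma M (HM : learner K2 M) (HPL : PLprop M) f r t :
  bijective f -> exists q, Qstep M (f, r) t q.
Proof.
move=> bf.
have [Bf HBf] := bound_fin f r.
set w := vcode 0 Bf.
have wB : Bf <= w by case: (vcode_ge 0 Bf).
have Hw : cls w = 0 by rewrite cls_code.
have fw : forall x, x <= r -> f x < w by move=> x xr; have := HBf x xr; lia.
have w0 : 0 < w by have := fw 0 (leq0n r); lia.
set g := sw 0 w \o f.
have bg : bijective g by apply: bij_comp (sw_bij _ _) bf.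
have Hc : forall a, a <= r -> clsB (g a) = (cls (f a)).+1.
  move=> a ar; rewrite /g /= /sw.
  have := fw a ar => faw.
  case: (eqVneq (f a) 0) => [e|ne].
    rewrite e cls0 /clsB; case e2 : w => [|w2]; first by rewrite e2 in w0.
    by rewrite -e2 Hw.
  have -> : (f a == w) = false by apply/negbTE/eqP; lia.
  by rewrite /clsB; case e : (f a) => [|z]; first by rewrite e in ne.
have Hg : forall a b, a <= r -> b <= r -> RA (f a) (f b) = RB (g a) (g b).
  by move=> a b ar br; rewrite /RB !Hc.
set T := Str RB g.
have HT : LD K2 T by apply: LD_B.
have [s [rs Ms]] : exists s, r.+1 <= s /\ M s T = Some iB.
  exact: (proj2 (HPL T HT iB) (iso_sym (iso_Str RB bg))) r.+1.
have [f' [bf' f'f Hf']] := @ext_lemma (fun a b => RB (g a) (g b))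
   (fun a => eqxx _) (fun a b => eq_sym _ _)
   (fun a b c (h1 : RB (g a) (g b)) (h2 : RB (g b) (g c)) =>
      introT eqP (etrans (eqP h1) (eqP h2)) : RB (g a) (g c))
   f r s bf (ltnW rs) Hg.
have Ms' : M s (Str RA f') = Some iB.
  rewrite (HM s (Str RA f') T) //; first exact: LD_A.
  by apply: agree_Str => a b ha hb; apply: Hf'.
have [g' f'K g'K] := bf'.
have [Bt HBt] := bound_fin g' t.
exists (f', maxn (maxn s t) Bt, s); split => //=.
  by apply/and3P; split; lia.
move=> y yt; exists (g' y) => //; have := HBt y yt; lia.
Qed.

Lemma inj_surj_bij (h : nat -> nat) :
  injective h -> (forall y, exists x, h x == y) -> bijective h.
Proof.
move=> hi hs; exists (fun y => ex_minn (hs y)).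
  by move=> x; case: ex_minnP => x' /eqP e _; apply: hi.
by move=> y; case: ex_minnP => x' /eqP.
Qed.

Lemma notPL : ~ PL_learnable K2.
Proof.
case=> M [HM HPL].
have step : forall p t, exists q, bijective p.1 -> Qstep M p t q.
  move=> [f r] t; case: (classic (bijective f)) => bf.
    by have [q Hq] := step_lemma HM HPL r t bf; exists q.
  by exists (f, 0, 0).
pose F p t := proj1_sig (constructive_indefinite_description _ (step p t)).
have FP : forall p t, bijective p.1 -> Qstep M p t (F p t).
  by move=> p t; rewrite /F; case: constructive_indefinite_description.
pose st := nat_rect (fun _ => ((nat -> nat) * nat)%type) (id, 0)
             (fun t p => (F p t).1).
have stS : forall t, st t.+1 = (F (st t) t).1 by [].
have bij : forall t, bijective (st t).1.
  elim=> [|t IH]; first by exists id.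
  by rewrite stS; exact: Q1 (FP _ _ IH).
have Q : forall t, Qstep M (st t) t (F (st t) t) by move=> t; apply: FP.
have mono : forall t, (st t).2 < (st t.+1).2 /\ t <= (st t.+1).2.
  move=> t; rewrite stS; have /and3P [h1 h2 h3] := Q3 (Q t); lia.
have rge : forall t, t <= (st t).2.
  elim=> [|t IH] //; have := mono t; lia.
have rmono : forall t u, t <= u -> (st t).2 <= (st u).2.
  move=> t; elim=> [|u IH] tu; first by have -> : t = 0 by lia.
  case: (leqP t u) => h; first by have := IH h; have := mono u; lia.
  by have -> : t = u.+1 by lia.
have stable : forall t u, t <= u -> forall x, x <= (st t).2 -> (st u).1 x = (st t).1 x.
  move=> t; elim=> [|u IH] tu x xr; first by have -> : t = 0 by lia.
  case: (leqP t u) => h; last by have -> : t = u.+1 by lia.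
  rewrite stS; have Hf := Q2 (Q u).
  rewrite Hf; first exact: IH.
  by have := rmono _ _ h; lia.
pose fL x := (st x).1 x.
have fLE : forall t x, x <= (st t).2 -> fL x = (st t).1 x.
  move=> t x xr; rewrite /fL; case: (leqP x t) => h.
    by rewrite (stable x t h) // rge.
  by rewrite (stable t x) //; lia.
have bL : bijective fL.
  apply: inj_surj_bij.
    move=> x y e; set t := maxn x y.
    have hx : x <= (st t).2 by have := rge t; lia.
    have hy : y <= (st t).2 by have := rge t; lia.
    move: e; rewrite (fLE t x hx) (fLE t y hy); apply: bij_inj; exact: bij.
  move=> y; have [x xr e] := Q5 (Q y) (leqnn y).
  exists x; rewrite (fLE y.+1) stS //; exact/eqP.
set Sinf := Str RA fL.
have HS : LD K2 Sinf by apply: LD_A.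
have inf : forall N, exists s, N <= s /\ M s Sinf = Some iB.
  move=> N; have /and3P [h1 h2 h3] := Q3 (Q N); have Ms := Q4 (Q N).
  exists (F (st N) N).2; split; first by have := rge N; lia.
  rewrite (HM _ Sinf (Str RA (F (st N) N).1.1)) //; last first.
    apply: agree_Str => a b ha hb; rewrite !(fLE N.+1) ?stS //; lia.
  by apply: LD_A; exact: Q1 (Q N).
have HB : iso (K2 iB) Sinf by apply/(HPL _ HS).
have h1 := proj2 (sing_iff (iso_sym HB)) erefl.
have HA : iso Sinf (K2 ord0) by apply: iso_Str.
by have := proj1 (sing_iff HA) h1.
Qed.


Theorem mainTheorem20 :
  (forall (sg : signature) (n : nat) (K : 'I_n -> Structure sg),
      noniso_family K -> PL_learnable K -> Eset_learnable K) /\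
  (exists (sg : signature) (n : nat) (K : 'I_n -> Structure sg),
      noniso_family K /\ Eset_learnable K /\ ~ PL_learnable K).
Proof.
split; first exact: part1.
exists sg2, 2, K2; split; [exact: noniso_K2 | split; [exact: Eset_K2 | exact: notPL]].
Qed.
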